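(* Let $\delta_0>0$. There exists $k_0$ such that for all $k\ge k_0$ and all $\delta\in[\delta_0,1-2/k]$ with $\delta k+k-1$ an odd integer, every point $(b_1,\dots,b_k,b_{12},\dots,b_{(k-1)k})\in KTW_P$ satisfies \[\delta k\alpha+\beta\ge\frac{(\delta^2k-1)|\Delta|}{4}+\frac12 .\]
   Context: $P(x)=\operatorname{sign}(\delta k x_1+\sum_{i=2}^kx_i)$. For $x\in\{-1,1\}^k$ let $p(x)\in\{-1,1\}^{k+\binom k2}$ be the vector $(x_1,\dots,x_k,x_1x_2,x_1x_3,\dots,x_{k-1}x_k)$; $KTW_P$ is the convex hull of $\{p(x):P(x)=1\}$, with coordinates named $b_i$ ($i\in[k]$) and $b_{ij}$ ($i<j$). Define $\alpha=b_1$, $\beta=\sum_{i=2}^kb_i$, $E=\frac{\delta^2k^2}{2}-\frac k2+1$, and $\Delta$ by $\sum_{2\le i<j\le k}b_{ij}=E(1+\Delta)$. *)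

(* Defs.v *)
From HB Require Import structures.
From mathcomp Require Import all_boot all_order all_algebra.
Set Implicit Arguments. Unset Strict Implicit. Unset Printing Implicit Defensive.
Import Order.TTheory GRing.Theory Num.Theory.
Local Open Scope ring_scope.

Section KTW.
Variable R : archiRealFieldType.

(* a point of {-1,1}^k is encoded by a boolean finite function; pm maps true |-> 1, false |-> -1 *)
Definition pm (b : bool) : R := if b then 1 else -1.

(* index i : 'I_k with val i = 0 is the paper's coordinate 1 *)
Definition Pfun (delta : R) (k : nat) (x : {ffun 'I_k -> bool}) : R :=
  Num.sg (\sum_(i < k) (if val i == 0%N then delta * k%:R else 1) * pm (x i)).

(* (b1, b2) lies in KTW_P = conv {p(x) : P(x) = 1}, where p(x) has coordinates
   b_i = x_i and b_ij = x_i x_j (i < j); entries b2 i j with i >= j are not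
   coordinates of the point and are unconstrained. *)
Definition in_KTW (delta : R) (k : nat) (b1 : 'I_k -> R) (b2 : 'I_k -> 'I_k -> R) : Prop :=
  exists lam : {ffun 'I_k -> bool} -> R,
    [/\ forall x, 0 <= lam x,
        forall x, Pfun delta x != 1 -> lam x = 0,
        \sum_x lam x = 1,
        forall i, b1 i = \sum_x lam x * pm (x i) &
        forall i j, (val i < val j)%N -> b2 i j = \sum_x lam x * (pm (x i) * pm (x j))].

Definition alpha (k : nat) (b1 : 'I_k -> R) : R := \sum_(i < k | val i == 0%N) b1 i.
Definition beta (k : nat) (b1 : 'I_k -> R) : R := \sum_(i < k | (0 < val i)%N) b1 i.
Definition Ek (delta : R) (k : nat) : R := delta ^+ 2 * k%:R ^+ 2 / 2 - k%:R / 2 + 1.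
(* Delta defined by sum_{2<=i<j<=k} b_ij = E (1 + Delta) *)
Definition Delta (delta : R) (k : nat) (b2 : 'I_k -> 'I_k -> R) : R :=
  (\sum_(i < k) \sum_(j < k | (0 < val i)%N && (val i < val j)%N) b2 i j) / Ek delta k - 1.

End KTW.

(* Main.v *)
Require Import Defs.
From HB Require Import structures.
From mathcomp Require Import all_boot all_order all_algebra.
From mathcomp.algebra_tactics Require Import ring lra.
From mathcomp Require Import zify.
Import Order.TTheory GRing.Theory Num.Theory.
Local Open Scope ring_scope.

Lemma sq_sum (R : comNzRingType) n (a : 'I_n -> R) :
  (\sum_i a i) ^+ 2 = \sum_i a i ^+ 2 + 2 * \sum_(i : 'I_n) \sum_(j : 'I_n | (i < j)%N) a i * a j.
Proof.
rewrite expr2 big_distrlr /=.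
have E : forall i, \sum_j a i * a j = a i ^+ 2 + \sum_(j : 'I_n | (i < j)%N) a i * a j
   + \sum_(j : 'I_n | (j < i)%N) a i * a j.
  move=> i; rewrite (bigD1 i) //= -expr2 -addrA; congr (_ + _).
  rewrite (bigID (fun j : 'I_n => (i < j)%N)) /=; congr (_ + _); apply: eq_bigl => j.
    by rewrite -val_eqE /=; case: ltngtP.
  by rewrite -val_eqE /=; case: ltngtP.
have S : \sum_(i : 'I_n) \sum_(j : 'I_n | (j < i)%N) a i * a j
        = \sum_(i : 'I_n) \sum_(j : 'I_n | (i < j)%N) a i * a j.
  rewrite (exchange_big_dep xpredT) //=.
  by apply: eq_bigr => j _; apply: eq_bigr => i _; rewrite mulrC.
rewrite (eq_bigr _ (fun i _ => E i)) !big_split /= S.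
ring.
Qed.

Lemma sum_pos (R : nmodType) n (F : 'I_n.+1 -> R) :
  \sum_(i < n.+1 | (0 < val i)%N) F i = \sum_(i < n) F (lift ord0 i).
Proof. by rewrite big_mkcond big_ord_recl /= add0r. Qed.

Definition pmz (b : bool) : int := if b then 1 else -1.
Lemma pmE (R : archiRealFieldType) b : pm R b = (pmz b)%:~R.
Proof. by case: b. Qed.
Lemma pm_sq (R : archiRealFieldType) b : pm R b * pm R b = 1.
Proof. by case: b; rewrite /pm; ring. Qed.
Lemma pm_bd (R : archiRealFieldType) b : -1 <= pm R b <= 1.
Proof. by case: b; rewrite /pm /=; lra. Qed.

Lemma pointwise (R : archiRealFieldType) (K D s t x1 : R) :
  1 <= K -> -(K-1) <= s <= K-1 -> 0 <= D <= K -> 1 <= t ->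
  (x1 = 1 \/ x1 = -1) -> t = D * x1 + s ->
  `|s^+2 - D^+2 - 1| <= K * (4 * t - 2).
Proof.
move=> hK /andP[hs1 hs2] /andP[hD1 hD2] ht hx et; rewrite ler_norml.
have h1 : 0 <= K * (t - 1) by apply: mulr_ge0; lra.
have t0 : 0 <= t by lra.
case: hx => e1; rewrite e1 in et; apply/andP; split.
- have : 0 <= (K - D) * t by apply: mulr_ge0; lra.
  have : 0 <= (t - 1) * (t + 1 + 2 * K) by apply: mulr_ge0; lra.
  nra.
- have : 0 <= (K - s + D) * t by apply: mulr_ge0; lra.
  nra.
- have : 0 <= (t + 2 * D) * t by apply: mulr_ge0; lra.
  nra.
- have : 0 <= (2 * K - s - D) * t by apply: mulr_ge0; lra.
  nra.
Qed.

Theorem lemma4p6 (R : archiRealFieldType) (delta0 : R) :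
  0 < delta0 ->
  exists k0 : nat, forall (k : nat) (delta : R),
    (k0 <= k)%N ->
    delta0 <= delta -> delta <= 1 - 2 / k%:R ->
    (exists z : int, delta * k%:R + k%:R - 1 = (2 * z + 1)%:~R) ->
    forall (b1 : 'I_k -> R) (b2 : 'I_k -> 'I_k -> R),
      in_KTW delta b1 b2 ->
      delta * k%:R * alpha b1 + beta b1 >=
        (delta ^+ 2 * k%:R - 1) * `|Delta delta b2| / 4 + 1 / 2.
Proof.
move=> hd0; exists 0%N => k delta _ hd hd1 [z hz] b1 b2 [lam [l0 lP l1 hb1 hb2]].
case: k => [|n] in b1 b2 hd1 hz lam l0 lP l1 hb1 hb2 *.
  have : \sum_x lam x = 0.
    apply: big1 => x _; apply: lP; rewrite /Pfun big_ord0 sgr0 eq_sym oner_neq0 //.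
  by rewrite l1 => /eqP; rewrite oner_eq0.
set K : R := n.+1%:R in hd1 hz *.
have hK : 1 <= K by rewrite /K ler1n.
have hK0 : 0 < K by lra.
set D : R := delta * K.
have hDK : 0 <= D <= K.
  have : delta <= 1.
    have h2 : 0 <= 2 / K by apply: divr_ge0; lra.
    move: hd1 h2; move: (2 / K) => q ? ?; lra.
  move=> h1; apply/andP; split; first by apply: mulr_ge0; lra.
  rewrite /D; nra.
pose x1 (x : {ffun 'I_n.+1 -> bool}) := pm R (x ord0).
pose s (x : {ffun 'I_n.+1 -> bool}) := \sum_(i < n.+1 | (0 < val i)%N) pm R (x i).
pose t (x : {ffun 'I_n.+1 -> bool}) := D * x1 x + s x.
have tE : forall x : {ffun 'I_n.+1 -> bool}, \sum_(i < n.+1) (if val i == 0%N then delta * n.+1%:R else 1) * pm R (x i) = t x.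
  move=> x; rewrite big_ord_recl /= /t /s sum_pos; congr (_ + _).
  by apply: eq_bigr => i _; rewrite mul1r.
have hD : D = (2 * z + 1 - n%:Z)%:~R.
  have hKn : K = n%:R + 1 by rewrite /K -addn1 natrD.
  rewrite rmorphB /= -hz /D hKn; change ((n%:Z)%:~R) with (n%:R : R); lra.
have tint : forall x, t x = ((2 * z + 1 - n%:Z) * pmz (x ord0) + \sum_(i < n.+1 | (0 < val i)%N) pmz (x i))%:~R.
  move=> x; rewrite /t /x1 /s rmorphD rmorphM /= -hD rmorph_sum /= pmE.
  by congr (_ + _); apply: eq_bigr => i _; rewrite pmE.
have t1 : forall x, lam x != 0 -> 1 <= t x.
  move=> x hx; have : Pfun delta x = 1.
    by apply/eqP; apply: contraNT hx => /lP ->.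
  rewrite /Pfun tE => /eqP; rewrite sgr_cp0 tint ltr0z => h.
  rewrite -[1]/((1:int)%:~R) ler_int; lia.
have sbd : forall x, -(K-1) <= s x <= K-1.
  move=> x; have -> : K - 1 = \sum_(i < n) (1:R).
    by rewrite sumr_const card_ord /K -addn1 natrD addrK.
  rewrite /s sum_pos -sumrN; apply/andP; split; apply: ler_sum => i _;
    by case/andP: (pm_bd R (x (lift ord0 i))).
have hal : alpha b1 = b1 ord0.
  by rewrite /alpha (big_pred1 ord0) // => i; rewrite /= -val_eqE.
have hbe : beta b1 = \sum_x lam x * s x.
  rewrite /beta (eq_bigr _ (fun i _ => hb1 i)) exchange_big /=.
  by apply: eq_bigr => x _; rewrite mulr_sumr.
have LHS : D * alpha b1 + beta b1 = \sum_x lam x * t x.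
  rewrite hal hbe hb1 mulr_sumr -big_split /=; apply: eq_bigr => x _.
  rewrite /t /x1; ring.
have hkey : forall x : {ffun 'I_n.+1 -> bool},
    \sum_(i < n.+1) \sum_(j < n.+1 | (0 < val i)%N && (val i < val j)%N) pm R (x i) * pm R (x j)
    = ((s x) ^+ 2 - n%:R) / 2.
  move=> x; pose a (i : 'I_n.+1) := if (0 < val i)%N then pm R (x i) else 0.
  have hs : s x = \sum_i a i by rewrite /s big_mkcond.
  have ha2 : \sum_i a i ^+ 2 = n%:R.
    rewrite big_ord_recl /a /= expr0n add0r.
    under eq_bigr => i _ do rewrite expr2 pm_sq.
    by rewrite sumr_const card_ord.
  have hc : \sum_(i : 'I_n.+1) \sum_(j : 'I_n.+1 | (i < j)%N) a i * a j =
      \sum_(i < n.+1) \sum_(j < n.+1 | (0 < val i)%N && (val i < val j)%N) pm R (x i) * pm R (x j).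
    apply: eq_bigr => i _; case: (ltnP 0 i) => h.
      apply: eq_big => [j|j hj]; first by [].
      by rewrite /a h (ltn_trans h hj).
    rewrite [RHS]big_pred0 //; apply: big1 => j _.
    by rewrite /a (_ : (0 < val i)%N = false) ?mul0r // ltnNge h.
  rewrite -hc hs sq_sum ha2.
  move: (\sum_(i : 'I_n.+1) \sum_(j : 'I_n.+1 | (i < j)%N) a i * a j) => c.
  by field.
have hQ : \sum_(i < n.+1) \sum_(j < n.+1 | (0 < val i)%N && (val i < val j)%N) b2 i j
    = \sum_x lam x * (((s x) ^+ 2 - n%:R) / 2).
  rewrite (eq_bigr (fun i : 'I_n.+1 => \sum_(j < n.+1 | (0 < val i)%N && (val i < val j)%N)
     \sum_y lam y * (pm R (y i) * pm R (y j)))); last first.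
    by move=> i _; apply: eq_bigr => j /andP[_ hij]; exact: hb2.
  rewrite (eq_bigr (fun i : 'I_n.+1 => \sum_y \sum_(j < n.+1 | (0 < val i)%N && (val i < val j)%N)
     lam y * (pm R (y i) * pm R (y j)))); last first.
    by move=> i _; rewrite exchange_big.
  rewrite exchange_big; apply: eq_bigr => y _; rewrite -hkey mulr_sumr.
  by apply: eq_bigr => i _; rewrite mulr_sumr.
rewrite LHS.
set c : R := delta ^+ 2 * K - 1.
set Del := Delta delta b2.
have tge : forall x, lam x * 1 <= lam x * t x.
  move=> x; have [->|hx] := eqVneq (lam x) 0; first by rewrite !mul0r.
  by apply: ler_wpM2l; [exact: l0 | exact: t1].
have hT : 1 <= \sum_x lam x * t x.
  rewrite -l1 (eq_bigr (fun x => lam x * 1)) ?ler_sum // => x _; by rewrite mulr1.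
have [hc|hc] := lerP c 0.
  have : c * `|Del| <= 0 by rewrite mulr_le0_ge0.
  move: hT; move: (\sum_x lam x * t x) (c * `|Del|) => T w ? ?; lra.
have hD2 : K < D ^+ 2.
  have : 1 < delta ^+ 2 * K by rewrite /c in hc; lra.
  move=> h; rewrite /D exprMn; nra.
set E := Ek delta n.+1.
have hEv : E = (D ^+ 2 - K + 2) / 2.
  by rewrite /E /Ek /D /K; field.
have hE : 0 < E by rewrite hEv; apply: divr_gt0; lra.
pose h x := ((s x) ^+ 2 - n%:R) / 2 / E - 1.
have hDel : Del = \sum_x lam x * h x.
  rewrite /Del /Delta -/E hQ mulr_suml -[X in _ - X]l1 -sumrB.
  by apply: eq_bigr => x _; rewrite /h; ring.
have hpt : forall x, lam x * (c * `|h x| / 4 + 1 / 2) <= lam x * t x.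
  move=> x; have [->|hx] := eqVneq (lam x) 0; first by rewrite !mul0r.
  apply: ler_wpM2l; first exact: l0.
  have hK1 : K = n%:R + 1 by rewrite /K -addn1 natrD.
  have hg : h x * (2 * E) = s x ^+ 2 - D ^+ 2 - 1.
    have hE0 : E != 0 by rewrite lt0r_neq0.
    rewrite /h mulrBl mul1r (mulrC 2 E) mulrA divfK // divfK ?pnatr_eq0 //.
    by rewrite hEv hK1 /K; field.
  have hx1 : x1 x = 1 \/ x1 x = -1 by rewrite /x1 /pm; case: (x ord0); [left|right].
  have hb := @pointwise R _ _ _ _ _ hK (sbd x) hDK (t1 x hx) hx1 erefl.
  have hA : `|h x| * (2 * E) = `|s x ^+ 2 - D ^+ 2 - 1|.
    by rewrite -hg normrM (ger0_norm (_ : 0 <= 2 * E)) //; apply: mulr_ge0; lra.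
  have hcK : c * K = D ^+ 2 - K by rewrite /c /D; ring.
  have hcg := ler_wpM2l (ltW hc) hb.
  have ht1 := t1 x hx.
  have h2E : 2 * E = D ^+ 2 - K + 2 by rewrite hEv; field.
  have key2 : c * `|h x| * (2 * E) <= (4 * t x - 2) * (2 * E).
    rewrite -mulrA hA h2E; rewrite mulrA hcK in hcg.
    have : 0 <= 4 * t x - 2 by lra.
    move: hcg; move: (`|s x ^+ 2 - D ^+ 2 - 1|) => G; nra.
  rewrite ler_pM2r in key2; last by apply: mulr_gt0; lra.
  move: key2; move: (c * `|h x|) => w; lra.
have hsplit : \sum_x lam x * (c * `|h x| / 4 + 1 / 2)
    = c / 4 * \sum_x lam x * `|h x| + 1 / 2 * \sum_x lam x.
  rewrite !mulr_sumr -big_split /=; apply: eq_bigr => x _; ring.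
have hnorm : `|Del| <= \sum_x lam x * `|h x|.
  rewrite hDel; apply: le_trans (ler_norm_sum _ _ _) _.
  by apply: ler_sum => x _; rewrite normrM ger0_norm.
have hfin : \sum_x lam x * (c * `|h x| / 4 + 1 / 2) <= \sum_x lam x * t x.
  by apply: ler_sum => x _; exact: hpt.
rewrite hsplit l1 in hfin.
have := ler_wpM2l (ltW hc) hnorm.
move: hfin; move: (\sum_x lam x * `|h x|) (\sum_x lam x * t x) (c * `|Del|) => S T w.
rewrite -[c / 4 * S]/(c * 4^-1 * S) -mulrA.
rewrite mulrCA; move: (c * S) => u ? ?; lra.
Qed.
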